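(* Let $T\ge 5$ and let $q$ be an integer with $5\le q\le T$. Let $G=(V,E)$ be a finite connected undirected graph with diameter $D$. Consider any execution of Algorithm FS in which the checkpoint set $\mathit{CP}$ is replaced by $\mathit{CP}_q=\{c\in\mathbb{N}_0 : c\equiv 0 \pmod q \text{ and } T-c>q-1\}$, under arbitrary adversarial activations, with rounds numbered so that round $0$ is the first round at whose beginning some node is active. Then for every round $t\ge qD+\bigl\lfloor \frac{D}{\lfloor T/q\rfloor}\bigr\rfloor\cdot(T\bmod q)$, all nodes are active and have equal clock values $\delta_t(v)$.
   Context: Model (beeping model with arbitrary activations). $G=(V,E)$ is a finite connected undirected graph; $N(v)$ is the set of neighbors of $v$. Time proceeds in synchronous rounds. In each round, each active node either beeps or listens; a listening node learns only whether at least one of its neighbors beeped in that round. Algorithm FS (with checkpoint set $C$). Each node $v$ stores $\delta(v)\in\{0,\dots,T-1\}$, $\mathit{State}(v)\in\{\mathit{Inactive},\mathit{Beep},\mathit{Listen}\}$, $\mathit{Induced}(v)\in\{\mathit{true},\mathit{false}\}$. Initially all nodes are Inactive. A node $v$ is activated in round $t$ if the adversary activates it in round $t$, or $v$ is inactive and some neighbor beeps in round $t-1$; then at the beginning of round $t$, $\delta(v)=1$, $\mathit{State}(v)=\mathit{Beep}$, $\mathit{Induced}(v)=\mathit{true}$. In each round each active node $v$, according to its state at the beginning of the round: (1) if $\mathit{State}(v)=\mathit{Beep}$: beeps; $\delta(v)\gets\delta(v)+1\bmod T$; $\mathit{State}(v)\gets\mathit{Listen}$; (2) if $\mathit{State}(v)=\mathit{Listen}$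 and some neighbor beeps: if $\delta(v)\equiv c-1\pmod T$ for some $c\in C$, then $\delta(v)\gets\delta(v)+2\bmod T$, $\mathit{State}(v)\gets\mathit{Beep}$, $\mathit{Induced}(v)\gets\mathit{true}$; else $\delta(v)\gets\delta(v)+1\bmod T$; (3) if $\mathit{State}(v)=\mathit{Listen}$ and no neighbor beeps: $\delta(v)\gets\delta(v)+1\bmod T$; then if ($\mathit{Induced}(v)=\mathit{true}$ and new $\delta(v)\in C$) or new $\delta(v)=0$: $\mathit{State}(v)\gets\mathit{Beep}$, $\mathit{Induced}(v)\gets\mathit{false}$. $\delta_t(v)$ denotes the value at the beginning of round $t$. *)

(* Defs.v *)
From mathcomp Require Import all_boot.
Set Implicit Arguments. Unset Strict Implicit. Unset Printing Implicit Defensive.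

Definition simple_graph (V : finType) (e : rel V) : Prop :=
  symmetric e /\ irreflexive e.

Definition within (V : finType) (e : rel V) (k : nat) (u v : V) : Prop :=
  exists p : seq V, [/\ path e u p, last u p = v & size p <= k].

Definition is_diameter (V : finType) (e : rel V) (D : nat) : Prop :=
  (forall u v : V, within e D u v) /\
  (0 < D -> exists u v : V, ~ within e D.-1 u v).

Inductive phase := Beep | Listen.

Inductive nstate :=
  | Inactive
  | Active (delta : nat) (st : phase) (induced : bool).

Definition beeps (s : nstate) : bool :=
  if s is Active _ Beep _ then true else false.

Definition fs_step (T : nat) (C : pred nat) (s : nstate) (heard : bool) : nstate :=
  match s with
  | Inactive => Inactive
  | Active d Beep ind => Active (d.+1 %% T) Listen ind
  | Active d Listen ind =>
      if heard then
        (* delta = c - 1 (mod T) for some c in C  <=>  delta + 1 = c (mod T) *)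
        if [exists c : 'I_T, C c && (d.+1 %% T == c %% T)]
        then Active (d.+2 %% T) Beep true
        else Active (d.+1 %% T) Listen ind
      else
        let d' := d.+1 %% T in
        if (ind && C d') || (d' == 0) then Active d' Beep false
        else Active d' Listen ind
  end.

(* Configuration at the beginning of round t (after activations of round t).
   adv t v : the adversary activates v in round t (only effective if v is
   inactive). Round 0 is the first round. *)
Fixpoint fs_conf (V : finType) (e : rel V) (T : nat) (C : pred nat)
    (adv : nat -> V -> bool) (t : nat) : V -> nstate :=
  match t with
  | 0 => fun v => if adv 0 v then Active 1 Beep true else Inactive
  | t'.+1 =>
      let prev := fs_conf e T C adv t' in
      fun v =>
        let heard := [exists u, e v u && beeps (prev u)] in
        match prev v with
        | Inactive =>
            if adv t v || heard then Active 1 Beep true else Inactive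
        | s => fs_step T C s heard
        end
  end.

Definition clock (s : nstate) : option nat :=
  if s is Active d _ _ then Some d else None.

(* Modified checkpoint set CP_q = { c in N_0 : c = 0 mod q and T - c > q - 1 }
   (T - c > q - 1 is read over the integers, i.e. c + q - 1 < T). *)
Definition CPq (T q : nat) : pred nat :=
  fun c => (c %% q == 0) && (c + (q - 1) < T).

(* Main.v *)
Require Import Defs.
From mathcomp Require Import all_boot zify.
Set Implicit Arguments. Unset Strict Implicit. Unset Printing Implicit Defensive.

Inductive lstate := LInactive | LActive (K : nat) (st : phase) (ind : bool).

Definition lbeeps (s : lstate) : bool :=
  if s is LActive _ Beep _ then true else false.

Definition proj (T : nat) (s : lstate) : nstate :=
  if s is LActive K st ind then Active (K %% T) st ind else Inactive.

Section Lift.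
Variables (T q : nat) (V : finType) (e : rel V) (adv : nat -> V -> bool).
Hypotheses (hT : 5 <= T) (hq : 5 <= q) (hqT : q <= T) (esym : symmetric e).

Local Notation C := (CPq T q).

Definition lstep (s : lstate) (h : bool) : lstate :=
  match s with
  | LInactive => LInactive
  | LActive K Beep ind => LActive K.+1 Listen ind
  | LActive K Listen ind =>
     if h then (if C (K.+1 %% T) then LActive K.+2 Beep true else LActive K.+1 Listen ind)
     else if (ind && C (K.+1 %% T)) || (K.+1 %% T == 0) then LActive K.+1 Beep false
     else LActive K.+1 Listen ind
  end.

Fixpoint lconf (t : nat) : V -> lstate :=
  match t with
  | 0 => fun v => if adv 0 v then LActive 1 Beep true else LInactive
  | t'.+1 => fun v =>
      let h := [exists u, e v u && lbeeps (lconf t' u)] in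
      match lconf t' v with
      | LInactive => if adv t'.+1 v || h then LActive 1 Beep true else LInactive
      | s => lstep s h
      end
  end.

Definition heard t v := [exists u, e v u && lbeeps (lconf t u)].

Lemma lconfS t v : lconf t.+1 v =
  match lconf t v with
  | LInactive => if adv t.+1 v || heard t v then LActive 1 Beep true else LInactive
  | s => lstep s (heard t v) end.
Proof. by []. Qed.

Lemma C_lt x : C x -> x < T.
Proof. rewrite /CPq => /andP[_]; lia. Qed.

Lemma exC x : x < T -> [exists c : 'I_T, C c && (x == c %% T)] = C x.
Proof.
move=> xT; apply/existsP/idP.
- case=> c /andP[Cc /eqP ->]. by rewrite modn_small.
- move=> Cx; exists (Ordinal xT); rewrite /= Cx /= modn_small //.
Qed.

Lemma beeps_proj s : beeps (proj T s) = lbeeps s.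
Proof. by case: s => [|K []]. Qed.

Lemma step_proj K st ind h :
  fs_step T C (Active (K %% T) st ind) h = proj T (lstep (LActive K st ind) h).
Proof.
have T0 : 0 < T by lia.
have E1 : (K %% T).+1 %% T = K.+1 %% T by rewrite -addn1 modnDml addn1.
have E2 : (K %% T).+2 %% T = K.+2 %% T by rewrite -addn2 modnDml addn2.
case: st => /=; first by rewrite E1.
rewrite E1 exC ?ltn_pmod //.
case: h => /=.
- by case: (C _) => /=; rewrite ?E2 ?E1.
- by case: ifP => _ /=; rewrite ?E1.
Qed.

Lemma conf_proj t v : fs_conf e T C adv t v = proj T (lconf t v).
Proof.
have T1 : 1 %% T = 1 by rewrite modn_small //; lia.
elim: t v => [|t IH] v /=.
  by case: (adv 0 v) => //=; rewrite T1.
have Hh : [exists u, e v u && beeps (fs_conf e T C adv t u)] = heard t v.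
  by apply: eq_existsb => u; rewrite IH beeps_proj.
rewrite Hh IH -/(heard t v).
case: (lconf t v) => [|K st ind].
  by rewrite /=; case: (_ || _) => //=; rewrite T1.
exact: step_proj.
Qed.

Lemma gapC a j : C (a %% T) -> C ((a + j) %% T) -> 0 < j < q -> False.
Proof.
move=> Ca Caj hj.
have Ex : (a + j) %% T = a %% T + j.
  rewrite -modnDml modn_small //.
  move: Ca; rewrite /CPq => /andP[_]; lia.
move: Caj Ca; rewrite Ex /CPq => /andP[/eqP h1 _] /andP[/eqP h2 _].
have d1 : q %| a %% T by apply/eqP.
have d2 : q %| a %% T + j by apply/eqP.
rewrite dvdn_addr // in d2.
have := dvdn_leq _ d2; lia.
Qed.

Lemma C0 : C 0.
Proof. rewrite /CPq mod0n eqxx /=; lia. Qed.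

Lemma noC_after K : 0 < K -> C (K %% T) \/ C (K.-1 %% T) -> C (K.+1 %% T) -> False.
Proof.
move=> K0 [H|H] H'.
- by apply: (@gapC K 1) => //; [rewrite addn1 | lia].
- apply: (@gapC K.-1 2) => //; last lia.
  by have -> : K.-1 + 2 = K.+1 by lia.
Qed.

Lemma stepA t v K st ind : lconf t v = LActive K st ind ->
  lconf t.+1 v = lstep (LActive K st ind) (heard t v).
Proof. by move=> H; rewrite lconfS H. Qed.

Lemma newA t v K st ind : lconf t v = LInactive -> lconf t.+1 v = LActive K st ind ->
  [/\ K = 1, st = Beep & ind = true].
Proof. by move=> H; rewrite lconfS H; case: (_ || _) => // [[<- <- <-]]. Qed.

Lemma inactS t v : lconf t.+1 v = LInactive -> lconf t v = LInactive /\ ~~ heard t v.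
Proof.
rewrite lconfS; case: (lconf t v) => [|K [] ind] /=.
- by case: ifP => // /norP[_ ->].
- by [].
- by case: (heard t v); case: ifP.
Qed.

Lemma heard_of t v u Ku iu : e v u -> lconf t u = LActive Ku Beep iu -> heard t v.
Proof. by move=> evu Hu; apply/existsP; exists u; rewrite evu Hu. Qed.

Lemma heardP t v : heard t v -> exists u Ku iu, e v u /\ lconf t u = LActive Ku Beep iu.
Proof.
case/existsP => u /andP[evu]; case Hu: (lconf t u) => [|Ku [] iu] //= _.
by exists u, Ku, iu.
Qed.

Lemma beepS t v K ind : lconf t v = LActive K Beep ind -> lconf t.+1 v = LActive K.+1 Listen ind.
Proof. by move/stepA ->. Qed.

Lemma jumpS t v K ind : lconf t v = LActive K Listen ind -> heard t v -> C (K.+1 %% T) ->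
  lconf t.+1 v = LActive K.+2 Beep true.
Proof. by move/stepA -> => /= -> ->. Qed.

Lemma stepK t v K st ind K' st' ind' : lconf t v = LActive K st ind ->
  lconf t.+1 v = LActive K' st' ind' ->
  (K' = K.+1 /\ (st' = Beep -> [/\ st = Listen, ~~ heard t v, ind' = false &
        (ind && C (K.+1 %% T)) || (K.+1 %% T == 0)])
           /\ (st' = Listen -> ind' = ind /\ (st = Listen -> ~~ (heard t v && C (K.+1 %% T)) /\
                 (~~ heard t v -> ~~ ((ind && C (K.+1 %% T)) || (K.+1 %% T == 0))))))
  \/ ([/\ K' = K.+2, st = Listen, heard t v & C (K.+1 %% T)] /\ (st' = Beep /\ ind' = true)).
Proof.
move/stepA ->; case: st => /=.
  by case=> <- <- <-; left; split.
case: (heard t v) => /=.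
- case: ifP => HC [<- <- <-]; first by right; split.
  by left; do !split => //; rewrite HC.
- case: ifP => HC [<- <- <-]; left; do !split => //; by rewrite HC.
Qed.

Lemma stepActive t v K st ind : lconf t v = LActive K st ind ->
  exists K' st' ind', lconf t.+1 v = LActive K' st' ind' /\ K.+1 <= K' <= K.+2.
Proof.
move=> H; case H': (lconf t.+1 v) => [|K' st' ind'].
  by case: (inactS H'); rewrite H.
exists K', st', ind'; split => //.
case: (stepK H H') => [[-> _]|[[-> _ _ _] _]]; lia.
Qed.


Definition Kin t := forall v K st ind, lconf t v = LActive K st ind -> 0 < K <= t.+1.
Definition S1 t := forall v K ind, lconf t v = LActive K Beep ind -> C (K %% T) \/ C (K.-1 %% T).
Definition S2 t := forall v K, lconf t v = LActive K Beep false -> C (K %% T).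
Definition Inact t := forall u v, e u v -> lconf t v = LInactive -> lconf t u <> LInactive ->
  lconf t u = LActive 1 Beep true.
Definition LE t := forall u v Ku su iu Kv sv iv, e u v -> lconf t u = LActive Ku su iu ->
  lconf t v = LActive Kv sv iv -> Ku <= Kv.+1 \/ [/\ Ku = Kv.+2, su = Beep & C (Kv.+1 %% T)].
Definition H2 t := forall u v Ku Kv sv iv, e u v -> lconf t u = LActive Ku Listen false ->
  lconf t v = LActive Kv sv iv -> Ku <= Kv.
Definition H1 t := forall u v Ku su iu Kv sv iv, e u v -> lconf t u = LActive Ku su iu ->
  lconf t v = LActive Kv sv iv -> Ku = Kv.+1 -> C (Ku %% T) -> su = Beep.

Lemma stepK' t v K st ind K' st' ind' : lconf t v = LActive K st ind ->
  lconf t.+1 v = LActive K' st' ind' -> K.+1 <= K' <= K.+2.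
Proof. by move=> H H'; case: (stepK H H') => [[-> _]|[[-> _ _ _] _]]; lia. Qed.

Lemma listenL t v K st ind : Kin t -> S1 t -> lconf t v = LActive K st ind ->
  C (K.+1 %% T) -> st = Listen.
Proof.
move=> hK hS H HC; case: st H => // H.
case: (noC_after _ _ HC) => //; [by case/andP: (hK _ _ _ _ H) | exact: hS H].
Qed.

Lemma jump_src t v u Kv iv Ku iu : Kin t -> S1 t -> LE t -> e v u ->
  lconf t v = LActive Kv Listen iv -> lconf t u = LActive Ku Beep iu ->
  C (Kv.+1 %% T) -> Kv < Ku.
Proof.
move=> hK hS hL evu Hv Hu HC.
have Ku0 : 0 < Ku by case/andP: (hK _ _ _ _ Hu).
case: (hL _ _ _ _ _ _ _ _ evu Hv Hu) => [h|[_ //]].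
rewrite ltnNge; apply/negP => h2.
have [E|E] : Kv = Ku \/ Kv = Ku.+1 by lia.
- by subst; apply: (noC_after Ku0 (hS _ _ _ Hu)).
- subst; case: (hS _ _ _ Hu) => H.
  + by apply: (@gapC Ku 2) => //; [rewrite addn2 | lia].
  + apply: (@gapC Ku.-1 3) => //; last lia.
    by have -> : Ku.-1 + 3 = Ku.+2 by lia.
Qed.

Lemma Kin0 : Kin 0.
Proof. by move=> v K st ind /=; case: (adv 0 v) => // [[<- _ _]]. Qed.

Lemma KinS t : Kin t -> S1 t -> LE t -> Kin t.+1.
Proof.
move=> hK hS hL v K' st' ind' H'.
case H: (lconf t v) => [|K st ind].
  by case: (newA H H') => -> _ _.
have := hK _ _ _ _ H.
case: (stepK H H') => [[-> _]|[[-> hst hh hC] _]]; first lia.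
subst st; case: (heardP hh) => u [Ku [iu [evu Hu]]].
have := jump_src hK hS hL evu H Hu hC.
have := hK _ _ _ _ Hu; lia.
Qed.

Lemma S1S t : S1 t.+1.
Proof.
move=> v K' ind' H'.
case H: (lconf t v) => [|K st ind].
  by case: (newA H H') => -> _ _; right; rewrite mod0n C0.
case: (stepK H H') => [[-> [hb _]]|[[-> _ _ hC] _]]; last by right.
case: (hb erefl) => _ _ _ /orP[/andP[_ ->]|/eqP ->]; first by left.
by left; apply: C0.
Qed.

Lemma S2S t : S2 t.+1.
Proof.
move=> v K' H'.
case H: (lconf t v) => [|K st ind].
  by case: (newA H H').
case: (stepK H H') => [[-> [hb _]]|[_ [_ //]]].
case: (hb erefl) => _ _ _ /orP[/andP[_ ->]|/eqP ->] //.
by apply: C0.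
Qed.

Lemma InactS t : Inact t -> Inact t.+1.
Proof.
move=> hI u v euv Hv' Hu'.
case: (inactS Hv') => Hv hh.
case Hu: (lconf t u) => [|Ku su iu].
  case Hu2: (lconf t.+1 u) Hu' => [|K' st' ind'] // _.
  by case: (newA Hu Hu2) => -> -> ->.
have Hu1 : lconf t u = LActive 1 Beep true by apply: (hI _ _ euv Hv); rewrite Hu.
by move: hh; rewrite (heard_of (u:=u) _ Hu1) // esym.
Qed.


Lemma LES t : Kin t -> S1 t -> Inact t -> LE t -> LE t.+1.
Proof.
move=> hK hS hI hL u v K'u su' iu' K'v sv' iv' euv Hu' Hv'.
case Hu: (lconf t u) => [|Ku su iu].
  by case: (newA Hu Hu') => -> _ _; left.
case Hv: (lconf t v) => [|Kv sv iv].
  have Hu1 : lconf t u = LActive 1 Beep true by apply: (hI _ _ euv Hv); rewrite Hu.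
  have := beepS Hu1; rewrite Hu' => -[-> _ _].
  by case: (newA Hv Hv') => -> _ _; left.
have bv := stepK' Hv Hv'.
case: (hL _ _ _ _ _ _ _ _ euv Hu Hv) => [h|[EK Es HC]].
- have [h1|h1] : Ku <= Kv \/ Ku = Kv.+1 by lia.
  + by have := stepK' Hu Hu'; left; lia.
  + case: (stepK Hu Hu') => [[-> _]|[[-> _ _ hC] [-> _]]]; first by left; lia.
    case: (stepK Hv Hv') => [[E _]|[[E _ _ _] _]]; last by left; lia.
    right; split => //; first by lia.
    by rewrite E -h1.
- subst su; have := beepS Hu; rewrite Hu' => -[-> _ _].
  have sL := listenL hK hS Hv HC; subst sv.
  have hh : heard t v by apply: (heard_of (u:=u) _ Hu); rewrite esym.
  have := jumpS Hv hh HC; rewrite Hv' => -[-> _ _].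
  by left; lia.
Qed.

Lemma H2S t : Kin t -> S1 t -> S2 t -> Inact t -> LE t -> H2 t -> H2 t.+1.
Proof.
move=> hK hS hS2 hI hL hH u v K'u K'v sv' iv' euv Hu' Hv'.
case Hu: (lconf t u) => [|Ku su iu].
  by case: (newA Hu Hu').
case: (stepK Hu Hu') => [[EK [_ hl]]|[_ [//]]].
case: (hl erefl) => Ei _; subst iu; clear hl.
case Hv: (lconf t v) => [|Kv sv iv].
  have Hu1 : lconf t u = LActive 1 Beep true by apply: (hI _ _ euv Hv); rewrite Hu.
  by move: Hu1; rewrite Hu.
have bv := stepK' Hv Hv'.
case: su Hu => Hu.
- have CK := hS2 _ _ Hu.
  case: (hL _ _ _ _ _ _ _ _ euv Hu Hv) => [h|[EK2 _ HC]]; last first.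
    by exfalso; apply: (@gapC Kv.+1 1) => //; [rewrite addn1 -EK2 | lia].
  have [h1|h1] : Ku <= Kv \/ Ku = Kv.+1 by lia.
  + lia.
  + subst Ku.
    have sL := listenL hK hS Hv CK; subst sv.
    have hh : heard t v by apply: (heard_of (u:=u) _ Hu); rewrite esym.
    have := jumpS Hv hh CK; rewrite Hv' => -[-> _ _]; lia.
- have := hH _ _ _ _ _ _ euv Hu Hv; lia.
Qed.

Lemma H1S t : Kin t -> Kin t.+1 -> S1 t -> H2 t -> H1 t.+1.
Proof.
move=> hK hK' hS hH u v K'u su' iu' K'v sv' iv' euv Hu' Hv' EK HC.
case Hu: (lconf t u) => [|Ku su iu].
  case: (newA Hu Hu') => E _ _; rewrite E in EK.
  by have := hK' _ _ _ _ Hv'; case: EK => <-.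
case Hv: (lconf t v) => [|Kv sv iv].
  case: (newA Hv Hv') => E _ _; rewrite E in EK; rewrite EK in HC.
  exfalso; apply: (@gapC 0 2) => //; [by rewrite mod0n C0 | lia].
have bv := stepK' Hv Hv'.
case: (stepK Hu Hu') => [[E1 [_ hl]]|[_ [//]]].
rewrite E1 in HC.
have sL := listenL hK hS Hu HC; subst su.
case: su' Hu' hl => // Hu' hl.
case: (hl erefl) => Ei /(_ erefl) [h1 h2]; subst iu'.
case hh: (heard t u) h1 h2 => /=.
  by rewrite HC.
move=> _ /(_ erefl); rewrite HC andbT => /norP[/negbTE Ei _]; subst iu.
have := hH _ _ _ _ _ _ euv Hu Hv; lia.
Qed.

Lemma Inv0 : [/\ Kin 0, S1 0, S2 0, Inact 0 & [/\ LE 0, H2 0 & H1 0]].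
Proof.
have A : forall v K st ind, lconf 0 v = LActive K st ind -> [/\ K = 1, st = Beep & ind = true].
  by move=> v K st ind /=; case: (adv 0 v) => // [[<- <- <-]].
split; first exact: Kin0.
- by move=> v K ind /A[-> _ _]; right; rewrite mod0n C0.
- by move=> v K /A[].
- move=> u v _ _; case H: (lconf 0 u) => [|K st ind] // _.
  by case: (A _ _ _ _ H) => -> -> ->.
split.
- by move=> u v Ku su iu Kv sv iv _ /A[-> _ _] /A[-> _ _]; left.
- by move=> u v Ku Kv sv iv _ /A[].
- by move=> u v Ku su iu Kv sv iv _ /A[-> _ _] /A[-> _ _].
Qed.

Lemma InvAll t : [/\ Kin t, S1 t, S2 t, Inact t & [/\ LE t, H2 t & H1 t]].
Proof.
elim: t => [|t [hK hS hS2 hI [hL hH hH1]]]; first exact: Inv0.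
have hK' := KinS hK hS hL.
split => //; [exact: S1S | exact: S2S | exact: InactS | split].
- exact: LES.
- exact: H2S.
- exact: H1S.
Qed.


Definition theta k := k * q + (k %/ (T %/ q)) * (T %% q).

Lemma theta_gt k : 0 < k -> k < theta k.
Proof.
move=> k0; have := leq_mul (leqnn k) hq; rewrite /theta.
move: (k %/ _ * _) (k * q) => X Y; lia.
Qed.

Lemma theta0 : theta 0 = 0.
Proof. by rewrite /theta div0n. Qed.

Lemma theta_inc k : theta k + 2 <= theta k.+1.
Proof.
rewrite /theta.
have : k %/ (T %/ q) <= k.+1 %/ (T %/ q) by apply: leq_div2r.
move/(leq_mul (leqnn (T %% q))) => h.
rewrite mulSn [k.+1 %/ _ * _]mulnC [k %/ _ * _]mulnC; lia.
Qed.

Lemma theta_C k : C (theta k %% T).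
Proof.
set m := T %/ q; set r := T %% q.
have m0 : 0 < m by rewrite divn_gt0 //; lia.
set a := k %/ m; set b := k %% m.
have Ek : k = a * m + b by rewrite /a /b -divn_eq.
have ET : T = m * q + r by rewrite /m /r -divn_eq.
have Eth : theta k = a * T + b * q.
  rewrite /theta -/m -/r -/a {1}Ek ET. nia.
have bm : b < m by rewrite /b ltn_pmod.
have bq : b * q + q <= T.
  have := leq_mul bm (leqnn q); rewrite ET; lia.
rewrite Eth modnMDl modn_small; last lia.
rewrite /CPq modnMl eqxx /=; lia.
Qed.

Lemma A0 a t : adv 0 a -> exists st ind, lconf t a = LActive t.+1 st ind.
Proof.
move=> ha; elim: t => [|t [st [ind H]]]; first by rewrite /= ha; exists Beep, true.
case: (stepActive H) => K' [st' [ind' [H' b]]].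
case: (InvAll t.+1) => hK _ _ _ _.
have hk := hK _ _ _ _ H'.
have E : K' = t.+2 by lia.
by exists st', ind'; rewrite H' E.
Qed.

Definition P t := forall a v d k, adv 0 a -> within e d a v -> k <= d ->
  theta k + (d - k) <= t -> exists K st ind, lconf t v = LActive K st ind /\ t.+1 <= K + (d - k).

Lemma P0 : P 0.
Proof.
move=> a v d k ha [p [_ Hl Hs]] kd.
have [->|k0] := posnP k; last by have := theta_gt k0; lia.
rewrite theta0 add0n subn0 leqn0 => /eqP d0; subst d.
case: p Hs Hl => // _ /= <-.
case: (A0 0 ha) => st [ind H]; exists 1, st, ind; split => //.
Qed.

Lemma PS t : P t -> P t.+1.
Proof.
move=> IH a v d k ha Hw kd hth.
case: (InvAll t) => hK hS _ hI [hL _ hH1].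
case: (InvAll t.+1) => hK' _ _ _ _.
have [hlt|heq] : theta k + (d - k) <= t \/ theta k + (d - k) = t.+1 by lia.
  case: (IH _ _ _ _ ha Hw kd hlt) => K [st [ind [H hb]]].
  case: (stepActive H) => K' [st' [ind' [H' b]]].
  by exists K', st', ind'; split => //; lia.
case: Hw => p [Hp Hl Hs].
case/lastP: p Hp Hl Hs => [|p' x] Hp Hl Hs.
  move: Hl => /= <-; case: (A0 t.+1 ha) => st [ind H].
  by exists t.+2, st, ind; split => //; lia.
rewrite last_rcons in Hl; subst x.
move: Hp; rewrite rcons_path => /andP[Hp' euv].
set u := last a p' in euv.
rewrite size_rcons in Hs.
have Wu : forall d', size p' <= d' -> within e d' a u.
  by move=> d' hd; exists p'.
have evu : e v u by rewrite esym.
have Wv : within e d a v.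
  exists (rcons p' v); split; [by rewrite rcons_path Hp' | exact: last_rcons | by rewrite size_rcons].
have [k0|kpos] := posnP k.
-
  subst k; rewrite theta0 add0n subn0 in heq hth *.
  case: (IH a u d.-1 0 ha (Wu d.-1 ltac:(lia)) (leq0n _) ltac:(rewrite theta0; lia))
    => Ku [su [iu [Hu _]]].
  case Hv: (lconf t v) => [|Kv sv iv].
  + have Hu1 : lconf t u = LActive 1 Beep true by apply: (hI _ _ euv Hv); rewrite Hu.
    have hh : heard t v := heard_of evu Hu1.
    by exists 1, Beep, true; rewrite lconfS Hv hh orbT; split => //; lia.
  + case: (stepActive Hv) => K' [st' [ind' [H' b]]].
    by exists K', st', ind'; split => //; lia.
- have thk := theta_gt kpos.
  case: (IH a v d 0 ha Wv
     (leq0n _) ltac:(rewrite theta0; lia)) => Kv [sv [iv [Hv hv]]].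
  have [kd'|kd'] : k < d \/ k = d by lia.
  + case: (IH a u d.-1 k ha (Wu d.-1 ltac:(lia)) ltac:(lia) ltac:(lia)) => Ku [su [iu [Hu hu]]].
    case: (stepActive Hv) => K' [st' [ind' [H' b]]].
    have [ok|nok] : t.+1 <= Kv + (d - k) \/ Kv + (d - k) <= t by lia.
      by exists K', st', ind'; split => //; lia.
    case: (hL _ _ _ _ _ _ _ _ euv Hu Hv) => [h|[EK Es HC]]; first lia.
    subst su.
    have sL := listenL hK hS Hv HC; subst sv.
    have hh : heard t v := heard_of evu Hu.
    have := jumpS Hv hh HC; rewrite H' => -[EK' _ _].
    by exists K', st', ind'; split => //; lia.
  + subst k.
    have thi := theta_inc d.-1.
    have Ed : d.-1.+1 = d by lia.
    rewrite Ed subnn addn0 in thi heq.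
    case: (IH a u d.-1 d.-1 ha (Wu d.-1 ltac:(lia)) (leqnn _) ltac:(lia)) => Ku [su [iu [Hu hu]]].
    rewrite subnn addn0 in hu.
    have Eu : Ku = t.+1 by have := hK _ _ _ _ Hu; lia.
    case: (IH a v d d.-1 ha Wv
       ltac:(lia) ltac:(lia)) => Kv2 [sv2 [iv2 [Hv2 hv2]]].
    rewrite Hv in Hv2; case: Hv2 => EKv _ _; subst Kv2.
    case: (stepActive Hv) => K' [st' [ind' [H' b]]].
    have [ok|nok] : t.+1 <= Kv \/ Kv = t by lia.
      by exists K', st', ind'; rewrite subnn addn0; split => //; lia.
    have HC : C (Ku %% T) by rewrite Eu -heq; apply: theta_C.
    have Es := hH1 _ _ _ _ _ _ _ _ euv Hu Hv ltac:(lia) HC; subst su.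
    have HC' : C (Kv.+1 %% T) by rewrite nok -Eu.
    have sL := listenL hK hS Hv HC'; subst sv.
    have hh : heard t v := heard_of evu Hu.
    have := jumpS Hv hh HC'; rewrite H' => -[EK' _ _].
    by exists K', st', ind'; rewrite subnn addn0; split => //; lia.
Qed.

Lemma Pall t : P t.
Proof. elim: t => [|t IH]; [exact: P0 | exact: PS]. Qed.

End Lift.

Theorem mainTheorem2 (T q : nat) (V : finType) (e : rel V) (D : nat)
    (adv : nat -> V -> bool) :
  5 <= T -> 5 <= q -> q <= T ->
  simple_graph e -> is_diameter e D ->
  (exists v, adv 0 v) ->
  forall t, q * D + (D %/ (T %/ q)) * (T %% q) <= t ->
    exists d, forall v, clock (fs_conf e T (CPq T q) adv t v) = Some d.
Proof.
move=> hT hq hqT [esym _] [hdiam _] [a ha] t ht.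
exists (t.+1 %% T) => v.
rewrite (conf_proj e adv hT hq hqT).
have hth : theta T q D + (D - D) <= t by rewrite /theta subnn addn0 mulnC.
case: (Pall hT hq hqT esym ha (hdiam a v) (leqnn D) hth) => K [st [ind [H hb]]].
case: (InvAll adv hT hq hqT esym t) => hK _ _ _ _.
have := hK _ _ _ _ H => hk.
have EK : K = t.+1 by rewrite subnn addn0 in hb; lia.
by rewrite H EK.
Qed.
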